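(* Let $\mathcal{L},\mathcal{L}'$ be distributive abstract logics and $h:\mathcal{L}\to\mathcal{L}'$ a stable logic map. Then $h$ is a lattice morphism of the associated lattices: for all $a,b\in Expr_{\mathcal{L}}$, $h(a\vee b)=_{\mathcal{L}'}h(a)\vee h(b)$ and $h(a\wedge b)=_{\mathcal{L}'}h(a)\wedge h(b)$.
   Context: An abstract logic is a triple $\mathcal{L}=(Expr_{\mathcal{L}},Th_{\mathcal{L}},\mathcal{C}_{\mathcal{L}})$ where $Expr_{\mathcal{L}}$ is a set, $Th_{\mathcal{L}}$ a non-empty set of subsets of $Expr_{\mathcal{L}}$ (theories) closed under intersections of non-empty subfamilies, and $\mathcal{C}_{\mathcal{L}}$ a set of operations on $Expr_{\mathcal{L}}$. $\mathcal{L}$ is closed under union of chains if the union of every non-empty chain of theories is a theory. A theory $T$ is prime if $T=\bigcap\mathcal{T}$ with $\mathcal{T}\subseteq Th_{\mathcal{L}}$ non-empty finite implies $T\in\mathcal{T}$; totally prime if this holds for non-empty $\mathcal{T}$ of any size. $PTh_{\mathcal{L}}$, $TPTh_{\mathcal{L}}$ denote these sets. A distributive abstract logic is one closed under union of chains with binary connectives $\vee,\wedge$ such that for all $a,b$ and all $T\in TPTh_{\mathcal{L}}$: $a\vee b\in T$ iff $a\in T$ or $b\in T$; $a\wedge b\in T$ iff $a,b\in T$. The associated lattice on $Expr_{\mathcal{L}}$ has order $a\le b$ iff every prime theory containing $a$ contains $b$, with meet $\wedge$ and join $\vee$. $x=_{\mathcal{L}'}y$ means $x\Vdash_{\mathcal{L}'}y$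 and $y\Vdash_{\mathcal{L}'}x$, where $x\Vdash_{\mathcal{L}'}y$ means every theory of $\mathcal{L}'$ containing $x$ contains $y$. A stable logic map $h:\mathcal{L}\to\mathcal{L}'$ is a function $Expr_{\mathcal{L}}\to Expr_{\mathcal{L}'}$ with $h^{-1}(T')\in Th_{\mathcal{L}}$ for all $T'\in Th_{\mathcal{L}'}$ and $h^{-1}(P')\in PTh_{\mathcal{L}}$ for all $P'\in PTh_{\mathcal{L}'}$. *)

(* Defs.v *)
From Stdlib Require Import List Fin.
Set Implicit Arguments.

Definition Operation (E : Type) : Type := { n : nat & (Fin.t n -> E) -> E }.

Definition binop {E : Type} (f : E -> E -> E) : Operation E :=
  existT _ 2 (fun v => f (v Fin.F1) (v (Fin.FS Fin.F1))).

Definition bigcap {E : Type} (F : (E -> Prop) -> Prop) : E -> Prop :=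
  fun x => forall T, F T -> T x.
Definition bigcup {E : Type} (F : (E -> Prop) -> Prop) : E -> Prop :=
  fun x => exists T, F T /\ T x.

Definition subset {E : Type} (A B : E -> Prop) : Prop := forall x, A x -> B x.

Definition finite_family {E : Type} (F : (E -> Prop) -> Prop) : Prop :=
  exists l : list (E -> Prop), forall T, F T <-> In T l.

Record AbstractLogic : Type := {
  Expr : Type;
  Th : (Expr -> Prop) -> Prop;
  Conn : Operation Expr -> Prop;
  Th_nonempty : exists T, Th T;
  Th_cap : forall F : (Expr -> Prop) -> Prop,
      (exists T, F T) -> (forall T, F T -> Th T) -> Th (bigcap F)
}.

Definition closed_union_chains (L : AbstractLogic) : Prop :=
  forall F : (Expr L -> Prop) -> Prop,
    (exists T, F T) -> (forall T, F T -> Th L T) ->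
    (forall T1 T2, F T1 -> F T2 -> subset T1 T2 \/ subset T2 T1) ->
    Th L (bigcup F).

Definition prime_theory (L : AbstractLogic) (T : Expr L -> Prop) : Prop :=
  Th L T /\
  forall F : (Expr L -> Prop) -> Prop,
    (forall T', F T' -> Th L T') -> (exists T', F T') -> finite_family F ->
    T = bigcap F -> F T.

Definition totally_prime_theory (L : AbstractLogic) (T : Expr L -> Prop) : Prop :=
  Th L T /\
  forall F : (Expr L -> Prop) -> Prop,
    (forall T', F T' -> Th L T') -> (exists T', F T') ->
    T = bigcap F -> F T.

Record DistributiveLogic : Type := {
  dlogic :> AbstractLogic;
  vee : Expr dlogic -> Expr dlogic -> Expr dlogic;
  wedge : Expr dlogic -> Expr dlogic -> Expr dlogic;
  dl_chains : closed_union_chains dlogic;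
  dl_vee_conn : Conn dlogic (binop vee);
  dl_wedge_conn : Conn dlogic (binop wedge);
  dl_vee : forall a b T, totally_prime_theory dlogic T ->
      (T (vee a b) <-> T a \/ T b);
  dl_wedge : forall a b T, totally_prime_theory dlogic T ->
      (T (wedge a b) <-> T a /\ T b)
}.

Definition entails (L : AbstractLogic) (x y : Expr L) : Prop :=
  forall T, Th L T -> T x -> T y.

Definition logic_eq (L : AbstractLogic) (x y : Expr L) : Prop :=
  entails L x y /\ entails L y x.

Definition lat_le (L : AbstractLogic) (a b : Expr L) : Prop :=
  forall P, prime_theory L P -> P a -> P b.

Definition preimage {A B : Type} (h : A -> B) (T : B -> Prop) : A -> Prop :=
  fun x => T (h x).

Definition stable_logic_map (L L' : AbstractLogic) (h : Expr L -> Expr L') : Prop :=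
  (forall T', Th L' T' -> Th L (preimage h T')) /\
  (forall P', prime_theory L' P' -> prime_theory L (preimage h P')).

(* Main.v *)
Require Import Defs.
From Stdlib Require Import List Classical FunctionalExtensionality PropExtensionality.
From mathcomp Require classical_sets.

Lemma set_ext {E : Type} (A B : E -> Prop) : (forall x, A x <-> B x) -> A = B.
Proof.
  intro H; apply functional_extensionality; intro x; apply propositional_extensionality; auto.
Qed.

Section Sep.
Variable L : AbstractLogic.
Hypothesis HC : closed_union_chains L.

Lemma sep (T : Expr L -> Prop) (x : Expr L) : Th L T -> ~ T x ->
  exists Q, totally_prime_theory L Q /\ subset T Q /\ ~ Q x.
Proof.
  intros HT Hx.
  pose (P := fun S : Expr L -> Prop =>
               Th L (fun y => S y \/ T y) /\ ~ (S x \/ T x)).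
  destruct (@classical_sets.Zorn_bigcup (Expr L) P) as [A [[HA1 HA2] Hmax]].
  { intros F HFP Htot.
    destruct (classic (exists X, F X)) as [[X0 HX0] | Hne].
    - pose (G := fun Y : Expr L -> Prop =>
                   exists X, F X /\ Y = (fun y => X y \/ T y)).
      assert (HG : Th L (bigcup G)).
      { apply HC.
        - exists (fun y => X0 y \/ T y). exists X0; split; auto.
        - intros Y [X [HX ->]]. apply (HFP X HX).
        - intros Y1 Y2 [X1 [HX1 ->]] [X2 [HX2 ->]].
          destruct (Htot X1 X2 HX1 HX2) as [H | H]; [left | right];
            intros y [Hy | Hy]; auto. }
      split.
      + replace (fun y => classical_sets.bigcup F (fun X => X) y \/ T y) with (bigcup G); auto.
        apply set_ext; intro y; split.
        * intros [Y [[X [HX ->]] Hy]]. destruct Hy as [Hy | Hy]; auto.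
          left. exists X; auto.
        * intros [[X HX Hy] | Hy].
          -- exists (fun y => X y \/ T y); split; auto. exists X; auto.
          -- exists (fun y => X0 y \/ T y); split; auto. exists X0; auto.
      + intros [[X HX Hy] | Hy].
        * apply (proj2 (HFP X HX)); auto.
        * auto.
    - split.
      + replace (fun y => classical_sets.bigcup F (fun X => X) y \/ T y) with T; auto.
        apply set_ext; intro y; split; auto.
        intros [[X HX _] | Hy]; auto. exfalso; apply Hne; eauto.
      + intros [[X HX _] | Hy]; auto. apply Hne; eauto. }
  exists (fun y => A y \/ T y). split; [split; auto|split].
  - intros F HF Hne HM.
    apply NNPP; intro HnF.
    apply HA2.
    assert (Hall : forall T', F T' -> T' x).
    { intros T' HT'. apply NNPP; intro HT'x.
      assert (Hsub : forall y, (A y \/ T y) -> T' y).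
      { intros y Hy. assert (Hb : bigcap F y) by (rewrite <- HM; exact Hy). apply Hb; auto. }
      apply (Hmax T').
      - split.
        + intros y Hy; apply Hsub; auto.
        + intro Hback. apply HnF.
          replace (fun y => A y \/ T y) with T'; auto.
          apply set_ext; intro y; split; auto; intro; left; apply Hback; auto.
      - split.
        + replace (fun y => T' y \/ T y) with T'; auto.
          apply set_ext; intro y; split; auto. intros [H|H]; auto.
        + intros [H|H]; [auto | apply HT'x; apply Hsub; auto]. }
    assert (Hb : bigcap F x) by (intros T' HT'; apply Hall; exact HT').
    change ((fun y => A y \/ T y) x). rewrite HM; exact Hb.
  - intros y Hy; auto.
  - auto.
Qed.

Lemma sep' (T : Expr L -> Prop) (x : Expr L) : Th L T ->
  (forall Q, totally_prime_theory L Q -> subset T Q -> Q x) -> T x.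
Proof.
  intros HT H. apply NNPP; intro Hx.
  destruct (sep T x HT Hx) as [Q [H1 [H2 H3]]]. exact (H3 (H Q H1 H2)).
Qed.

End Sep.
Arguments sep' {L} HC {T} {x} _ _.

Lemma tp_prime (L : AbstractLogic) Q : totally_prime_theory L Q -> prime_theory L Q.
Proof. intros [H1 H2]; split; [exact H1 | intros F HF Hne _ HE; exact (H2 F HF Hne HE)]. Qed.

Arguments tp_prime {L} {Q} _.

Lemma prime_vee (L : DistributiveLogic) (P : Expr L -> Prop) a b :
  prime_theory L P -> (P (vee L a b) <-> P a \/ P b).
Proof.
  intros [HP Hpr]. pose proof (dl_chains L) as HC. split.
  - intro Hv.
    pose (F1 := fun Q => totally_prime_theory L Q /\ subset P Q /\ Q a).
    pose (F2 := fun Q => totally_prime_theory L Q /\ subset P Q /\ ~ Q a).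
    destruct (classic (exists Q, F1 Q)) as [HF1 | HF1].
    2:{ right. apply (sep' HC HP). intros Q HQ HPQ.
        assert (~ Q a) by (intro; apply HF1; exists Q; split; auto).
        destruct (proj1 (dl_vee L a b HQ) (HPQ _ Hv)); tauto. }
    destruct (classic (exists Q, F2 Q)) as [HF2 | HF2].
    2:{ left. apply (sep' HC HP). intros Q HQ HPQ.
        apply NNPP; intro; apply HF2; exists Q; split; auto. }
    assert (T1 : Th L (bigcap F1)) by (apply Th_cap; auto; intros T [[] _]; auto).
    assert (T2 : Th L (bigcap F2)) by (apply Th_cap; auto; intros T [[] _]; auto).
    pose (G := fun Y => Y = bigcap F1 \/ Y = bigcap F2).
    assert (HGP : G P).
    { apply Hpr.
      - intros Y [->| ->]; auto.
      - exists (bigcap F1); left; auto.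
      - exists (bigcap F1 :: bigcap F2 :: nil). intro T; simpl; unfold G; split.
        + intros [-> | ->]; auto.
        + intros [H | [H | []]]; auto.
      - apply set_ext; intro y; split.
        + intros Hy Y [->| ->]; intros Q [_ [HQ _]]; auto.
        + intro Hy. apply (sep' HC HP). intros Q HQ HPQ.
          destruct (classic (Q a)).
          * apply (Hy (bigcap F1)); [left; auto | split; auto].
          * apply (Hy (bigcap F2)); [right; auto | split; auto]. }
    destruct HGP as [E | E]; rewrite E.
    + left. intros Q [_ [_ H]]; auto.
    + right. intros Q [HQ [HPQ Hna]].
      destruct (proj1 (dl_vee L a b HQ) (HPQ _ Hv)); tauto.
  - intro H. apply (sep' HC HP). intros Q HQ HPQ.
    apply (dl_vee L a b HQ). destruct H; auto.
Qed.

Arguments prime_vee {L} {P} a b _.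

Lemma th_wedge (L : DistributiveLogic) (T : Expr L -> Prop) a b :
  Th L T -> (T (wedge L a b) <-> T a /\ T b).
Proof.
  intros HT. pose proof (dl_chains L) as HC. split.
  - intro Hw; split; apply (sep' HC HT); intros Q HQ HTQ;
      apply (dl_wedge L a b HQ); auto.
  - intros [Ha Hb]. apply (sep' HC HT); intros Q HQ HTQ.
    apply (dl_wedge L a b HQ); auto.
Qed.

Arguments th_wedge {L} {T} a b _.

Theorem lemma3p12 (L L' : DistributiveLogic) (h : Expr L -> Expr L') :
  stable_logic_map L L' h ->
  forall a b : Expr L,
    logic_eq L' (h (vee L a b)) (vee L' (h a) (h b)) /\
    logic_eq L' (h (wedge L a b)) (wedge L' (h a) (h b)).
Proof.
  intros [S1 S2] a b. pose proof (dl_chains L') as HC.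
  split; split; intros T HT Hx.
  - apply (sep' HC HT). intros Q HQ HTQ.
    pose proof (S2 Q (tp_prime HQ)) as HP.
    apply (dl_vee L' _ _ HQ).
    destruct (proj1 (prime_vee a b HP) (HTQ _ Hx)); auto.
  - apply (sep' HC HT). intros Q HQ HTQ.
    pose proof (S2 Q (tp_prime HQ)) as HP.
    apply (proj2 (prime_vee a b HP)).
    apply (dl_vee L' _ _ HQ); auto.
  - pose proof (S1 T HT) as HT'.
    destruct (proj1 (th_wedge a b HT') Hx).
    apply (th_wedge _ _ HT); auto.
  - pose proof (S1 T HT) as HT'.
    destruct (proj1 (th_wedge _ _ HT) Hx).
    apply (proj2 (th_wedge a b HT')); auto.
Qed.
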